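(* Let $D$ be a spatial graph diagram and consider any Wirtinger coloring process on its truncated diagram, i.e. a sequence of stages $(A_0,f_0)\to(A_1,f_1)\to\cdots$ where $A_0$ is the set of seed strands and each subsequent stage is obtained by one coloring move. Then at every stage, for each color $c$, the set of strands colored $c$ is either (1) a single connected arc, if the seed of color $c$ is a single strand, or (2) a union of $n$ disjoint arcs, if the seed of color $c$ is the set of strands at a deleted vertex of degree $n$.
   Context: A spatial graph diagram $D$ is a generic planar projection of a spatial graph with crossing information. Its truncated diagram is obtained by deleting all vertices of degree $>2$, leaving free ends. A strand is an arc connecting an undercrossing to a free end, or connecting two undercrossings. A coloring process starts with $k$ seeds, each colored with its own color: a seed is either a single strand or the set of all strands incident to one deleted vertex (a ''pod'', all such strands getting the same color). At stage $i$, $A_i$ is the set of colored strands and $f_i\colon A_i\to\{\text{colors}\}$ the coloring. A coloring move: at a crossing whose overstrand is colored and one of whose two understrands is colored, color the other understrand with the color of that colored understrand; thus $A_{i+1}=A_i\cup\{s\}$ for one new strand $s$. *)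

(* Defs.v *)
(* Combinatorial model of the truncated diagram of a
   spatial graph diagram, at the level of strands. *)
From mathcomp Require Import all_boot.
Set Implicit Arguments. Unset Strict Implicit. Unset Printing Implicit Defensive.

(* V = deleted vertices (degree > 2), X = crossings, S = strands.
   Each strand has two ends (indexed by bool).  An end lies either
     - at a free end created by deleting a vertex v        : inl (inl v)
     - at an undercrossing x (strand passes under at x)     : inl (inr x)
     - at a (non-deleted) vertex of degree one               : inr tt   *)
Notation endpoint V X := ((V + X) + unit)%type.
Notation FreeEnd v := (inl (inl v)).
Notation UnderEnd x := (inl (inr x)).

Record tdiagram (V X S : finType) := TDiagram {
  over : X -> S;
  endp : S -> bool -> endpoint V X;
  under_two : forall x : X,
      #|[pred e : S * bool | endp e.1 e.2 == UnderEnd x]| = 2;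
  (* every deleted vertex has degree > 2 (= number of free ends there) *)
  deleted_deg : forall v : V,
      2 < #|[pred e : S * bool | endp e.1 e.2 == FreeEnd v]|
}.

Section Defs.
Variables (V X S : finType) (D : tdiagram V X S).

Definition deg (v : V) : nat :=
  #|[pred e : S * bool | endp D e.1 e.2 == FreeEnd v]|.

Definition joined (s t : S) : bool :=
  [exists x : X, exists b : bool, exists b' : bool,
     [&& endp D s b == UnderEnd x, endp D t b' == UnderEnd x
       & (s, b) != (t, b')]].

(* a connected arc: nonempty duplicate-free chain of strands, consecutive
   ones meeting at an undercrossing *)
Definition is_arc (p : seq S) : bool :=
  if p is s :: p' then uniq p && path joined s p' else false.

Inductive seed := SeedStrand of S | SeedPod of V.

Definition seed_set (sd : seed) : {set S} :=
  match sd with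
  | SeedStrand s => [set s]
  | SeedPod v => [set s | [exists b : bool, endp D s b == FreeEnd v]]
  end.

(* one coloring move from coloring f to coloring f' (None = uncolored) *)
Definition coloring_move (k : nat) (f f' : S -> option 'I_k) : Prop :=
  exists (x : X) (s t : S) (b b' : bool) (c : 'I_k),
    [/\ endp D s b = UnderEnd x, endp D t b' = UnderEnd x & (s, b) <> (t, b')] /\
    [/\ f (over D x) <> None, f t = Some c, f s = None
      & forall y, f' y = if y == s then Some c else f y].

End Defs.
Arguments SeedStrand {V S}.
Arguments SeedPod {V S}.

(* Main.v *)
Require Import Defs.
From mathcomp Require Import all_boot.

Section Aux.
Set Implicit Arguments. Unset Strict Implicit.
Variables (V X S : finType) (D : tdiagram V X S).

Lemma under3 x u1 e1 u2 e2 u e :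
  endp D u1 e1 = UnderEnd x -> endp D u2 e2 = UnderEnd x -> (u1,e1) <> (u2,e2) ->
  endp D u e = UnderEnd x -> (u,e) = (u1,e1) \/ (u,e) = (u2,e2).
Proof.
move=> H1 H2 N12 H.
case: (eqVneq (u,e) (u1,e1)) => [->|N1]; first by left.
case: (eqVneq (u,e) (u2,e2)) => [->|N2]; first by right.
have := under_two D x.
rewrite (cardD1 (u1,e1)) (cardD1 (u2,e2)) (cardD1 (u,e)) !inE /= H1 H2 H !eqxx /=.
have -> : (u2, e2) != (u1, e1) by apply/eqP => E; apply: N12; rewrite E.
by rewrite N1 N2.
Qed.

Lemma joined_sym s t : joined D s t = joined D t s.
Proof.
by apply/existsP/existsP => -[x /existsP[b /existsP[b' /and3P[h1 h2 h3]]]];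
  exists x; apply/existsP; exists b'; apply/existsP; exists b;
  rewrite h1 h2 eq_sym h3.
Qed.

Lemma arcE p : is_arc D p = (p != [::]) && uniq p && sorted (joined D) p.
Proof. by case: p. Qed.

Lemma arc_rev p : is_arc D (rev p) = is_arc D p.
Proof.
rewrite !arcE rev_uniq rev_sorted -!size_eq0 size_rev.
by rewrite (eq_sorted (e:=fun z => (joined D)^~ z) (e':=joined D) (fun a b => joined_sym b a)).
Qed.

Lemma arc_prepend s t r : is_arc D (t :: r) -> s \notin t :: r -> joined D s t ->
  is_arc D (s :: t :: r).
Proof. by rewrite /= => /andP[-> ->] -> ->. Qed.

Lemma extend p s t x b b' : is_arc D p -> t \in p -> s \notin p ->
  endp D s b = UnderEnd x -> endp D t b' = UnderEnd x -> (s,b) <> (t,b') ->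
  exists p', is_arc D p' /\ p' =i s :: p.
Proof.
move=> Ap tp sp Hs Ht Hne.
have Jst : joined D s t.
  apply/existsP; exists x; apply/existsP; exists b; apply/existsP; exists b'.
  by rewrite Hs Ht !eqxx /=; apply/eqP.
move: Ap sp; case/splitPr: tp => p1 p2.
case/lastP: p1 => [|q a].
  move=> Ap sp; exists (s :: t :: p2); split => //; exact: arc_prepend.
case: p2 => [|n r].
  move=> Ap sp; exists (s :: rev (rcons q a ++ [:: t])); split.
    rewrite cats1 rev_rcons; apply: arc_prepend => //.
      by rewrite -rev_rcons arc_rev -cats1.
    by rewrite -rev_rcons mem_rev -cats1.
  by move=> y; rewrite !inE mem_rev.
rewrite arcE cat_rcons => /andP[/andP[_ U]].
rewrite sorted_cat_cons => /andP[_ /= /and3P[Jat Jtn _]] sp.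
move: U; rewrite cat_uniq => /and3P[_ _ /= /and3P[]].
rewrite !inE !negb_or => /and3P[Hat Han _] /andP[Htn _] _.
move: sp; rewrite !mem_cat !inE !negb_or => /andP[_ /and3P[Hsa Hst /andP[Hsn _]]].
case/existsP: Jat => x1 /existsP[e1 /existsP[e2 /and3P[/eqP A1 /eqP T1 _]]].
case/existsP: Jtn => x2 /existsP[e3 /existsP[e4 /and3P[/eqP T2 /eqP N2 _]]].
case: (eqVneq b' e2) => [E2|D2].
  move: T1; rewrite -E2 Ht => -[E]; subst x1.
  case: (under3 Hs Ht Hne A1) => -[E _]; subst a.
    by rewrite eqxx in Hsa.
  by rewrite eqxx in Hat.
case: (eqVneq b' e3) => [E3|D3].
  move: T2; rewrite -E3 Ht => -[E]; subst x2.
  case: (under3 Hs Ht Hne N2) => -[E _]; subst n.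
    by rewrite eqxx in Hsn.
  by rewrite eqxx in Htn.
have E23 : e2 = e3 by move: (b') (e2) (e3) D2 D3 => [] [] [].
subst e3; move: T2; rewrite T1 => -[E]; subst x2.
have Hne2 : (a, e1) <> (t, e2) by move=> -[E _]; subst a; rewrite eqxx in Hat.
case: (under3 A1 T1 Hne2 N2) => -[E _]; subst n.
  by rewrite eqxx in Han.
by rewrite eqxx in Htn.
Qed.
End Aux.

Theorem lemma3p1 (V X S : finType) (D : tdiagram V X S)
  (k : nat) (seeds : 'I_k -> seed V S)
  (* the pod of a degree-n vertex consists of n (distinct) strands *)
  (Hpod : forall (c : 'I_k) (v : V), seeds c = SeedPod v ->
            #|seed_set D (SeedPod v)| = deg D v)
  (N : nat) (f : nat -> S -> option 'I_k)
  (* stage 0: exactly the seed strands are colored, each with its seed's color *)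
  (H0 : forall (s : S) (c : 'I_k), f 0 s = Some c <-> s \in seed_set D (seeds c))
  (Hstep : forall i, i < N -> coloring_move D (f i) (f i.+1)) :
  forall i, i <= N -> forall c : 'I_k,
    (forall s0, seeds c = SeedStrand s0 ->
       exists p : seq S, is_arc D p /\ [set s | f i s == Some c] = [set s in p])
    /\
    (forall v, seeds c = SeedPod v ->
       exists ps : seq (seq S),
         [/\ size ps = deg D v,
             all (is_arc D) ps,
             pairwise (fun p q : seq S => [disjoint p & q]) ps
           & [set s | f i s == Some c] = [set s | has (fun p => s \in p) ps]]).
Proof.
elim=> [|i IH] Hi c.
  split.
    move=> s0 Hs; exists [:: s0]; split => //.
    apply/setP => y; rewrite !inE.
    apply/eqP/idP => [/H0|/eqP->]; first by rewrite Hs inE.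
    by apply/H0; rewrite Hs inE.
  move=> v Hv.
  exists [seq [:: y] | y <- enum (seed_set D (SeedPod v))]; split.
  - by rewrite size_map -cardE (Hpod c).
  - by apply/allP => p /mapP[y _ ->].
  - rewrite pairwise_map.
    apply: (sub_pairwise (r := [rel x y | x != y])); last by rewrite -uniq_pairwise enum_uniq.
    by move=> a b /= ab; rewrite disjoint_cons inE; apply/andP; split; [exact: ab | apply/pred0P].
  - apply/setP => y; rewrite !inE has_map.
    rewrite (eq_has (a2 := pred1 y)); last by move=> z; rewrite /= inE eq_sym.
    rewrite has_pred1 mem_enum.
    apply/eqP/idP => [/H0|]; first by rewrite Hv.
    by move=> H; apply/H0; rewrite Hv.
have IHi := IH (ltnW Hi).
have [x [s [t [b [b' [c0 [[Hs Ht Hne] [Hov Hft Hfs Hf']]]]]]]] := Hstep i Hi.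
case: (eqVneq c c0) => [Ec|Nc]; last first.
  have -> : [set y | f i.+1 y == Some c] = [set y | f i y == Some c].
    apply/setP => y; rewrite !inE (Hf' y); case: (y =P s) => [->|] //.
    rewrite Hfs; apply/eqP => -[E]; move: Nc; rewrite E eqxx. by [].
  exact: (IHi c).
subst c0; have [IHs IHp] := IHi c.
have tin : forall A : pred S, [set y | f i y == Some c] = [set y in A] -> t \in A.
  move=> A E; have : t \in [set y | f i y == Some c] by rewrite inE Hft.
  by rewrite E inE.
have snin : forall A : pred S, [set y | f i y == Some c] = [set y in A] -> s \notin A.
  move=> A E; have : s \notin [set y | f i y == Some c] by rewrite inE Hfs.
  by rewrite E inE.
split.
  move=> s0 Hs0; have [p [Ap Ep]] := IHs s0 Hs0.
  have [p' [Ap' Ep']] := extend Ap (tin _ Ep) (snin _ Ep) Hs Ht Hne.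
  exists p'; split => //; apply/setP => y; rewrite !inE (Hf' y) Ep' inE.
  case: (y =P s) => [->|_]; first by rewrite eqxx.
  by have := congr1 (fun A : {set S} => y \in A) Ep; rewrite !inE /= => ->.
move=> v Hv; have [ps [Sz Aps Pps Eps]] := IHp v Hv.
have Eps' : [set y | f i y == Some c] = [set y in [pred y | has (fun p => y \in p) ps]].
  by rewrite Eps; apply/setP => y; rewrite !inE.
have := tin _ Eps'; rewrite inE => /hasP[p pps tp].
have := snin _ Eps'; rewrite inE => /hasPn sps.
have Ap : is_arc D p by move/allP: Aps => /(_ p pps).
have [p' [Ap' Ep']] := extend Ap tp (sps p pps) Hs Ht Hne.
move: pps Sz Aps Pps Eps sps; case/splitPr => ps1 ps2 Sz Aps Pps Eps sps.
exists (ps1 ++ p' :: ps2); split.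
- by rewrite size_cat /= -Sz size_cat.
- by move: Aps; rewrite !all_cat /= Ap' => /and3P[-> _ ->].
- have Dl : forall q : seq S, s \notin q -> [disjoint p' & q] = [disjoint p & q].
    by move=> q sq; rewrite (eq_disjoint Ep') disjoint_cons sq.
  have Dr : forall q : seq S, s \notin q -> [disjoint q & p'] = [disjoint q & p].
    by move=> q sq; rewrite disjoint_sym Dl // disjoint_sym.
  move: Pps; rewrite !pairwise_cat !pairwise_cons !allrel_consr.
  have -> : all (fun q : seq S => [disjoint q & p']) ps1 = all (fun q : seq S => [disjoint q & p]) ps1.
    by apply: eq_in_all => q qin; apply: Dr; apply: sps; rewrite mem_cat qin.
  have -> : all (fun q : seq S => [disjoint p' & q]) ps2 = all (fun q : seq S => [disjoint p & q]) ps2.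
    apply: eq_in_all => q qin; apply: Dl; apply: sps. by rewrite mem_cat inE qin !orbT.
  by [].
- apply/setP => y; rewrite !inE (Hf' y) has_cat /= Ep' inE.
  case: (y =P s) => [->|_]; first by rewrite eqxx orbT.
  have := congr1 (fun A : {set S} => y \in A) Eps; rewrite !inE has_cat /= => ->.
  by [].

Qed.
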